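(* Let $q\in\mathbb C$ with $|q-1|>1$, let $\rho=1/|1-q|$, and let $\mathcal C_q=\{v/(q+v): v\in[-1,0]\}$. Then a complex number $t$ has the property that, for every $s\in D(\rho)$, $1+(q-1)ts\neq0$ and $t\|_q s\in D(\rho)$, if and only if $t\in\mathcal C_q$. In particular $\{t\|_q s: t\in\mathcal C_q, s\in D(\rho)\}\subseteq D(\rho)$, and $\mathcal C_q$ is the largest subset of $\mathbb C$ with this property.
   Context: $D(r)=\{t\in\mathbb C:|t|\le r\}$. For $t,s\in\mathbb C$ with $1+(q-1)ts\neq0$, $t\|_q s=\dfrac{t+s+(q-2)ts}{1+(q-1)ts}$ (the parallel connection of transmissivities). Note $q+v\ne0$ for $v\in[-1,0]$ since $|q-1|>1$. *)

(* Defs.v *)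
(* The complex numbers are modelled by an arbitrary
   numClosedFieldType C (e.g. algC). *)
From HB Require Import structures.
From mathcomp Require Import all_boot all_order all_algebra.
Set Implicit Arguments. Unset Strict Implicit. Unset Printing Implicit Defensive.
Import Order.TTheory GRing.Theory Num.Theory.
Local Open Scope ring_scope.

Definition disk (C : numClosedFieldType) (r : C) (t : C) : Prop := `|t| <= r.

Definition parq (C : numClosedFieldType) (q t s : C) : C :=
  (t + s + (q - 2) * t * s) / (1 + (q - 1) * t * s).

Definition Cq (C : numClosedFieldType) (q t : C) : Prop :=
  exists v : C, v \is Num.real /\ -1 <= v /\ v <= 0 /\ t = v / (q + v).

(* Main.v *)
Require Import Defs.
From HB Require Import structures.
From mathcomp Require Import all_boot all_order all_algebra.
From mathcomp Require Import ring.
Import Order.TTheory GRing.Theory Num.Theory.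
Local Open Scope ring_scope.

Section S.
Variable C : numClosedFieldType.
Variable a : C.
Hypothesis ha : 1 < `|a|.

Definition AA := a * a^*.
Definition PP (Y : C) := Y * (AA + a^*) + Y^* * (AA + a) - (AA - 1) * Y * Y^*.

Lemma a0 : 0 < `|a|. Proof. exact: lt_trans ha. Qed.
Lemma AAE : AA = `|a| ^+ 2. Proof. by rewrite normCK. Qed.
Lemma A1 : 1 < AA.
Proof. rewrite AAE expr2; have := ha => h; rewrite -[1](mulr1 1). 
by apply: ltr_pM. Qed.
Lemma A0 : 0 < AA. Proof. exact: lt_trans A1. Qed.
Lemma AAc : AA^* = AA. Proof. by rewrite /AA rmorphM /= conjCK mulrC. Qed.
Lemma a1 : 1 + a != 0.
Proof. apply/negP => /eqP h. have : a = -1 by rewrite -(addKr 1 a) h addr0.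
move=> e; move: ha; by rewrite e normrN1 ltxx. Qed.
Lemma Aa : AA + a != 0.
Proof. apply/negP => /eqP h. have e : a = - AA by rewrite -(addKr AA a) h addr0.
have : `|a| = `|a| ^+ 2 by rewrite {1}e normrN -AAE ger0_norm // ltW // A0.
rewrite expr2 => h2. have : `|a| * 1 = `|a| * `|a| by rewrite mulr1.
move/mulfI. rewrite normr_eq0 => /(_ _) h3. 
have an : a != 0 by rewrite -normr_eq0 gt_eqF // a0.
move: (h3 an) => h4. by move: ha; rewrite -h4 ltxx.
Qed.
Lemma conjE : (forall x y : C, (x + y)^* = x^* + y^*) /\ (forall x y : C, (x * y)^* = x^* * y^*)
  /\ (forall x y : C, (x - y)^* = x^* - y^*) /\ (forall x : C, (- x)^* = - x^*).
Proof. split; [exact: rmorphD|split; [exact: rmorphM|split; [exact: rmorphB|exact: rmorphN]]]. Qed.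

Lemma LE Y : Y + a != 0 -> (`|(Y-1)/(Y+a)| <= `|a|^-1) = (0 <= PP Y).
Proof.
move=> hY. have hY0 : 0 < `|Y + a| by rewrite normr_gt0.
rewrite normf_div ler_pdivrMr // ler_pdivlMl ?a0 //.
rewrite -ler_sqr ?nnegrE ?mulr_ge0 ?normr_ge0 // exprMn -AAE !normCK.
rewrite -subr_ge0; congr (0 <= _).
rewrite /PP /AA !rmorphD ?rmorphN /= ?conjC1 ?conjCN1. ring.
Qed.

Lemma Pneg : PP (-a) < 0.
Proof.
have -> : PP (-a) = - (AA * ((1 + a) * (1 + a)^*)).
  rewrite /PP /AA rmorphN rmorphD /= conjC1; ring.
rewrite oppr_lt0 mulr_gt0 ?A0 // mul_conjC_gt0 a1 //.
Qed.

Lemma Pne Y : 0 <= PP Y -> Y + a != 0.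
Proof.
move=> h; apply/negP; rewrite addr_eq0 => /eqP e; move: h; rewrite e.
by move=> h; move: (lt_le_trans Pneg h); rewrite ltxx.
Qed.
Lemma ya_ne y : `|y| <= 1 -> y + a != 0.
Proof.
move=> hy; apply/negP; rewrite addr_eq0 => /eqP e.
by move: (le_lt_trans hy ha); rewrite e normrN ltxx.
Qed.

Lemma s_ne1 s : `|s| <= `|a|^-1 -> 1 - s != 0.
Proof.
move=> hs; rewrite subr_eq0; apply/negP => /eqP e; move: hs; rewrite -e normr1.
by move=> h; move: (ha); rewrite -invf_lt1 ?a0 // => h3; move: (lt_le_trans h3 h); rewrite ltxx.
Qed.

Lemma keyD q (hqa : q = a + 1) y z : y + a != 0 -> z + a != 0 ->
  1 + (q - 1) * ((y-1)/(y+a)) * ((z-1)/(z+a)) = (1 + a) * (y * z + a) / ((y + a) * (z + a)).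
Proof. move=> h1 h2; rewrite hqa; field; rewrite h1 h2 //. Qed.

Lemma keyP q (hqa : q = a + 1) y z : y + a != 0 -> z + a != 0 -> y * z + a != 0 ->
  parq q ((y-1)/(y+a)) ((z-1)/(z+a)) = (y * z - 1) / (y * z + a).
Proof. move=> h1 h2 h3; rewrite /parq hqa; field.
have -> : (y + a) * (z + a) + (a + 1 - 1) * (y - 1) * (z - 1) = (1 + a) * (y * z + a) by ring.
by rewrite h1 h2 h3 mulf_neq0 ?a1. Qed.

Lemma Dne q (hqa : q = a + 1) y z : y + a != 0 -> z + a != 0 ->
  (1 + (q - 1) * ((y-1)/(y+a)) * ((z-1)/(z+a)) != 0) = (y * z + a != 0).
Proof.
move=> h1 h2; rewrite keyD // !mulf_eq0 !invr_eq0 !mulf_eq0 (negbTE a1) (negbTE h1) (negbTE h2) /=.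
by rewrite orbF.
Qed.

Lemma suff q (hqa : q = a + 1) y s : y \is Num.real -> 0 <= y -> y <= 1 -> `|s| <= `|a|^-1 ->
  1 + (q-1)*((y-1)/(y+a))*s != 0 /\ `|parq q ((y-1)/(y+a)) s| <= `|a|^-1.
Proof.
move=> yr y0 y1 hs.
have hya : y + a != 0 by apply: ya_ne; rewrite ger0_norm.
have s1 := s_ne1 s hs.
pose z := (1 + a * s) / (1 - s).
have ezA : z + a = (1 + a) / (1 - s) by rewrite /z; field.
have ez1 : z - 1 = (1 + a) * s / (1 - s) by rewrite /z; field.
have hza : z + a != 0 by rewrite ezA mulf_neq0 ?invr_eq0 ?a1.
have es : s = (z - 1) / (z + a) by rewrite ezA ez1; field; rewrite s1 a1.
rewrite es.
have Pz : 0 <= PP z by rewrite -LE // -es.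
have Pyz : 0 <= PP (y * z).
  have -> : PP (y * z) = y * PP z + (AA - 1) * (z * z^*) * (y * (1 - y)).
    rewrite /PP rmorphM /= (conj_Creal yr); ring.
  apply: addr_ge0; first exact: mulr_ge0.
  apply: mulr_ge0; [apply: mulr_ge0; [rewrite subr_ge0; exact: ltW A1 | exact: mul_conjC_ge0] | apply: mulr_ge0 => //; by rewrite subr_ge0].
have hyz := Pne (y * z) Pyz.
rewrite Dne // hyz; split => //.
by rewrite keyP // LE.
Qed.
Lemma AA1 : AA - 1 != 0.
Proof. by rewrite subr_eq0 gt_eqF // A1. Qed.

Lemma parq0 (q t : C) : parq q t 0 = t.
Proof. by rewrite /parq !(mulr0, addr0) divr1. Qed.

Lemma claim q (hqa : q = a + 1) y : y + a != 0 ->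
  (forall s, `|s| <= `|a|^-1 ->
     1 + (q-1)*((y-1)/(y+a))*s != 0 /\ `|parq q ((y-1)/(y+a)) s| <= `|a|^-1) ->
  forall k, k != 0 -> k^* = 2 - k -> 0 <= y * k^* + y^* * k - 2 * y * y^*.
Proof.
move=> hya H k k0 hk.
have kb0 : k^* != 0 by rewrite conjC_eq0.
have A10 := AA1.
pose c := (AA + a) / (AA - 1).
pose cb := (AA + a^*) / (AA - 1).
have cc : c^* = cb by rewrite /c /cb fmorph_div /= rmorphD rmorphB /= AAc conjC1.
have c0 : c != 0 by rewrite mulf_neq0 ?invr_eq0 ?Aa.
pose z := 2 * c / k.
have zc : z^* = 2 * cb / k^*.
  by rewrite /z fmorph_div /= rmorphM /= cc (conjC_nat C 2).
have Pz0 : PP z = 0.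
  rewrite /PP zc hk /z /c /cb; field.
  by rewrite A10 k0 -hk kb0.
have hza : z + a != 0 by apply: Pne; rewrite Pz0.
have hs : `|(z - 1) / (z + a)| <= `|a|^-1 by rewrite LE // Pz0.
have [hD hp] := H _ hs.
rewrite Dne // in hD.
rewrite keyP // LE // in hp.
have e : PP (y * z) = (2 * (AA - 1) * (c * c^*) / (k * k^*)) * (y * k^* + y^* * k - 2 * y * y^*).
  rewrite /PP rmorphM /= zc cc /z /cb /c; field.
  by rewrite A10 k0 kb0.
move: hp; rewrite e pmulr_rge0 //.
apply: mulr_gt0; last by rewrite invr_gt0 mul_conjC_gt0.
apply: mulr_gt0; last by rewrite mul_conjC_gt0.
by rewrite mulr_gt0 ?subr_gt0 ?A1 // ltr0n.
Qed.
Lemma nec q (hqa : q = a + 1) t :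
  (forall s, `|s| <= `|a|^-1 -> 1 + (q-1)*t*s != 0 /\ `|parq q t s| <= `|a|^-1) ->
  exists y, [/\ y \is Num.real, 0 <= y, y <= 1 & t = (y-1)/(y+a)].
Proof.
move=> H.
have h0 : `|t| <= `|a|^-1.
  have := H 0; rewrite normr0 parq0 invr_ge0 normr_ge0 => /(_ isT) [] //.
have t1 := s_ne1 t h0.
pose y := (1 + a * t) / (1 - t).
have eyA : y + a = (1 + a) / (1 - t) by rewrite /y; field.
have ey1 : y - 1 = (1 + a) * t / (1 - t) by rewrite /y; field.
have hya : y + a != 0 by rewrite eyA mulf_neq0 ?invr_eq0 ?a1.
have et : t = (y - 1) / (y + a) by rewrite eyA ey1; field; rewrite t1 a1.
move: y hya et {eyA ey1} => y hya et; subst t.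
have Cl := claim q hqa y hya H.
exists y.
case: (eqVneq (y^*) y) => ey; last first.
  have ymy : y^* - y != 0 by rewrite subr_eq0.
  have y1 : 2 * y + 2 != 0.
    have -> : 2 * y + 2 = 2 * (y + 1) by ring.
    rewrite mulf_neq0 ?pnatr_eq0 //; apply: contra ey; rewrite addr_eq0 => /eqP ->.
    by rewrite conjCN1.
  pose k := - (2 * y + 2) / (y^* - y).
  have k0 : k != 0 by rewrite mulf_neq0 ?oppr_eq0 ?invr_eq0.
  have hk : k^* = 2 - k.
    rewrite /k fmorph_div /= rmorphN rmorphB rmorphD rmorphM /= conjCK (conjC_nat C 2) ?conjC1.
    field; rewrite ymy /=; rewrite -oppr_eq0 opprB; by [].
  have := Cl k k0 hk.
  have -> : y * k^* + y^* * k - 2 * y * y^* = - (2 + 2 * (y * y^*)).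
    rewrite hk /k; field; by [].
  rewrite oppr_ge0 => hle.
  have : 0 < 2 + 2 * (y * y^*) by apply: ltr_wpDr; [apply: mulr_ge0; [exact: ler0n | exact: mul_conjC_ge0] | exact: ltr0n].
  by move=> h; move: (lt_le_trans h hle); rewrite ltxx.
have yr : y \is Num.real by apply/CrealP.
have hk1 : (1 : C)^* = 2 - 1 by rewrite conjC1; ring.
have := Cl 1 (oner_neq0 _) hk1.
rewrite conjC1 ey.
have -> : y * 1 + y * 1 - 2 * y * y = 2 * (y * (1 - y)) by ring.
rewrite pmulr_rge0 ?ltr0n // => h.
have y0 : 0 <= y.
  case: (real_ge0P yr) => // hy.
  move: h; rewrite nmulr_rge0 // subr_le0 => h1.
  by move: (lt_le_trans hy (le_trans ler01 h1)); rewrite ltxx.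
split => //.
have r1 : 1 - y \is Num.real by rewrite rpredB ?real1.
case: (real_ge0P r1); first by rewrite subr_ge0.
rewrite subr_lt0 => h1.
have : y * (1 - y) < 0 by rewrite pmulr_rlt0 ?subr_lt0 // (lt_trans ltr01 h1).
by move=> h2; move: (lt_le_trans h2 h); rewrite ltxx.
Qed.
End S.

Theorem lemma7p3 (C : numClosedFieldType) (q : C) (hq : 1 < `|q - 1|) :
  let rho := `|1 - q|^-1 in
  (forall t : C,
     (forall s : C, disk rho s ->
        1 + (q - 1) * t * s != 0 /\ disk rho (parq q t s))
     <-> Cq q t)
  /\
  (forall t s : C, Cq q t -> disk rho s ->
     1 + (q - 1) * t * s != 0 /\ disk rho (parq q t s))
  /\
  (forall S : C -> Prop,
     (forall t s : C, S t -> disk rho s ->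
        1 + (q - 1) * t * s != 0 /\ disk rho (parq q t s)) ->
     forall t : C, S t -> Cq q t).
Proof.
move=> rho.
have hqa : q = (q - 1) + 1 by rewrite subrK.
have erho : rho = `|q - 1|^-1 by rewrite /rho distrC.
have Fwd : forall t, Cq q t -> forall s, disk rho s ->
    1 + (q - 1) * t * s != 0 /\ disk rho (parq q t s).
  move=> t [v [vr [v1 [v0 ->]]]] s; rewrite /disk erho => hs.
  have -> : v / (q + v) = (v + 1 - 1) / (v + 1 + (q - 1)).
    congr (_ / _); [ring | rewrite {1}hqa; ring].
  apply: (@suff C (q - 1) hq q hqa) => //.
  - by rewrite rpredD ?real1.
  - by rewrite -lerBlDr sub0r.
  - by rewrite -lerBrDr subrr.
have Bwd : forall t, (forall s : C, disk rho s ->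
        1 + (q - 1) * t * s != 0 /\ disk rho (parq q t s)) -> Cq q t.
  move=> t H.
  have H' : forall s, `|s| <= `|q - 1|^-1 -> 1 + (q-1)*t*s != 0 /\ `|parq q t s| <= `|q - 1|^-1.
    by move=> s hs; rewrite -erho; apply: H; rewrite /disk erho.
  have [y [yr y0 y1 ->]] := @nec C (q - 1) hq q hqa t H'.
  exists (y - 1); split; first by rewrite rpredB ?real1.
  split; first by rewrite lerBrDr addNr.
  split; first by rewrite subr_le0.
  congr (_ / _); rewrite {2}hqa; ring.
split; first by move=> t; split; [exact: Bwd | exact: Fwd].
split; first by move=> t s ht; exact: Fwd.
by move=> S HS t St; apply: Bwd => s; exact: HS.
Qed.
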